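(* Let $(Y,\sigma_Y)$ be an infinite mixing shift of finite type. Then there is a closed $\sigma_Y$-invariant subset $Z\subseteq Y$ such that $(Z,\sigma_Y|_Z)$ is a CAM $\mathbb{Z}$-system.
   Context: A $\mathbb{Z}$-system $(X,T)$ is a compact metric space $X$ with a homeomorphism $T$. It is topologically transitive if for all nonempty open $U,V$ there is $n$ with $T^nU\cap V\neq\emptyset$; the action is faithful if $T^n=\mathrm{id}$ only for $n=0$. A point is periodic if its orbit is finite. The system is chaotic almost minimal (CAM) if: (1) it is topologically transitive and the action is faithful; (2) the periodic points are dense in $X$; (3) every proper closed $T$-invariant subset of $X$ is finite. A shift of finite type is a subshift of $\mathcal{A}^{\mathbb{Z}}$ ($\mathcal{A}$ finite) defined by forbidding a finite set of words; it is mixing if for all nonempty open $U,V$ there is $N$ with $\sigma^nU\cap V\neq\emptyset$ for all $n\ge N$. *)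

(* Defs.v *)
From Stdlib Require Import ZArith List.
Import ListNotations.
Open Scope Z_scope.

Section Shift.
Variable A : Type.

Definition config := Z -> A.
Definition cset := config -> Prop.

Definition shiftn (n : Z) (x : config) : config := fun i => x (i + n).

(* x and y agree on the window [-N, N]; the sets {y | agree x y N} form a
   neighbourhood basis of x for the product (= standard metric) topology *)
Definition agree (x y : config) (N : nat) : Prop :=
  forall i, Z.abs i <= Z.of_nat N -> y i = x i.

Definition relopen (S U : cset) : Prop :=
  (forall x, U x -> S x) /\
  forall x, U x -> exists N : nat, forall y, S y -> agree x y N -> U y.

Definition closed (C : cset) : Prop :=
  forall x, (forall N : nat, exists y, C y /\ agree x y N) -> C x.

Definition invariant (C : cset) : Prop :=
  forall x, C x <-> C (shiftn 1 x).

Definition finite_set (C : cset) : Prop :=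
  exists l : list config, forall x, C x -> In x l.

Definition nonempty (C : cset) : Prop := exists x, C x.

Definition occurs (w : list A) (x : config) (i : Z) : Prop :=
  forall (k : nat) (a : A), nth_error w k = Some a -> x (i + Z.of_nat k) = a.

Definition SFT (Y : cset) : Prop :=
  exists F : list (list A),
    forall x, Y x <-> (forall w i, In w F -> ~ occurs w x i).

Definition mixing (Y : cset) : Prop :=
  forall U V, relopen Y U -> relopen Y V -> nonempty U -> nonempty V ->
    exists N : nat, forall n : nat, (N <= n)%nat ->
      exists x, U x /\ V (shiftn (Z.of_nat n) x).

Definition transitive (S : cset) : Prop :=
  forall U V, relopen S U -> relopen S V -> nonempty U -> nonempty V ->
    exists n : Z, exists x, U x /\ V (shiftn n x).

Definition faithful (S : cset) : Prop :=
  forall n : Z, (forall x, S x -> shiftn n x = x) -> n = 0.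

Definition periodic (x : config) : Prop :=
  finite_set (fun y => exists n : Z, y = shiftn n x).

Definition dense_periodic (S : cset) : Prop :=
  forall U, relopen S U -> nonempty U -> exists x, U x /\ periodic x.

(* chaotic almost minimal system (S, sigma|_S), S closed invariant *)
Definition CAM (S : cset) : Prop :=
  transitive S /\ faithful S /\ dense_periodic S /\
  (forall C, (forall x, C x -> S x) -> closed C -> invariant C ->
     (exists x, S x /\ ~ C x) -> finite_set C).

End Shift.

Arguments shiftn {A}.
Arguments agree {A}.
Arguments relopen {A}.
Arguments closed {A}.
Arguments invariant {A}.
Arguments finite_set {A}.
Arguments nonempty {A}.
Arguments occurs {A}.
Arguments SFT {A}.
Arguments mixing {A}.
Arguments transitive {A}.
Arguments faithful {A}.
Arguments periodic {A}.
Arguments dense_periodic {A}.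
Arguments CAM {A}.

(* Main.v *)
Require Import Defs.
From Stdlib Require Import ZArith List Lia Classical FunctionalExtensionality.
Import ListNotations.
Open Scope Z_scope.

Section Gen.
Variable A : Type.
Variable d : A.

Definition window (x : config A) (s : Z) (len : nat) : list A :=
  map (fun k => x (s + Z.of_nat k)) (seq 0 len).

Lemma window_length x s len : length (window x s len) = len.
Proof. unfold window. rewrite length_map, length_seq. reflexivity. Qed.

Lemma nth_map_seq {B : Type} (f : nat -> B) len k d' : (k < len)%nat ->
  nth k (map f (seq 0 len)) d' = f k.
Proof.
  intros H. rewrite (nth_indep (map f (seq 0 len)) d' (f 0%nat)) by (rewrite length_map, length_seq; lia).
  rewrite map_nth. rewrite seq_nth by lia. reflexivity.
Qed.

Lemma window_nth x s len k d' : (k < len)%nat ->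
  nth k (window x s len) d' = x (s + Z.of_nat k).
Proof.
  intros H. unfold window. exact (nth_map_seq (fun k => x (s + Z.of_nat k)) len k d' H).
Qed.

Lemma window_ext x y s s' len :
  (forall k, (k < len)%nat -> x (s + Z.of_nat k) = y (s' + Z.of_nat k)) ->
  window x s len = window y s' len.
Proof.
  intros H. apply nth_ext with (d := d) (d' := d).
  - rewrite !window_length; reflexivity.
  - intros n Hn. rewrite window_length in Hn. rewrite !window_nth by lia. apply H; lia.
Qed.

Lemma window_eq_pt x y s s' len :
  window x s len = window y s' len ->
  forall k, (k < len)%nat -> x (s + Z.of_nat k) = y (s' + Z.of_nat k).
Proof.
  intros H k Hk. rewrite <- (window_nth x s len k d Hk), <- (window_nth y s' len k d Hk).
  rewrite H; reflexivity.
Qed.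

Lemma window_shift n x s len : window (shiftn n x) s len = window x (s + n) len.
Proof. apply window_ext. intros k _. unfold shiftn. f_equal. lia. Qed.

Lemma window_app x s a b :
  window x s (a + b) = window x s a ++ window x (s + Z.of_nat a) b.
Proof.
  apply nth_ext with (d := d) (d' := d).
  - rewrite length_app, !window_length; reflexivity.
  - intros n Hn. rewrite window_length in Hn. rewrite window_nth by lia.
    destruct (Nat.ltb_spec n a).
    + rewrite app_nth1 by (rewrite window_length; lia). rewrite window_nth by lia. reflexivity.
    + rewrite app_nth2 by (rewrite window_length; lia). rewrite window_length.
      rewrite window_nth by lia. f_equal. lia.
Qed.

Lemma skipn_window x s len dd : (dd <= len)%nat ->
  skipn dd (window x s len) = window x (s + Z.of_nat dd) (len - dd).
Proof.
  intros H. replace len with (dd + (len - dd))%nat at 1 by lia.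
  rewrite window_app. rewrite skipn_app. rewrite window_length.
  rewrite skipn_all2 by (rewrite window_length; lia). replace (dd - dd)%nat with 0%nat by lia.
  reflexivity.
Qed.

Lemma firstn_window x s len l : (l <= len)%nat ->
  firstn l (window x s len) = window x s l.
Proof.
  intros H. replace len with (l + (len - l))%nat at 1 by lia.
  rewrite window_app. rewrite firstn_app. rewrite window_length.
  rewrite firstn_all2 by (rewrite window_length; lia). replace (l - l)%nat with 0%nat by lia.
  simpl. rewrite app_nil_r. reflexivity.
Qed.

Lemma sub_window x s len dd l : (dd + l <= len)%nat ->
  window x (s + Z.of_nat dd) l = firstn l (skipn dd (window x s len)).
Proof.
  intros H. rewrite skipn_window by lia. rewrite firstn_window by lia. reflexivity.
Qed.

Definition per (W : list A) : config A :=
  fun i => nth (Z.to_nat (i mod Z.of_nat (length W))) W d.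

Lemma per_add W i c : per W (i + c * Z.of_nat (length W)) = per W i.
Proof.
  unfold per. destruct (length W) eqn:E.
  - simpl. rewrite Z.mul_0_r, Z.add_0_r. reflexivity.
  - rewrite Z_mod_plus_full. reflexivity.
Qed.

Lemma per_nth W (k : nat) : (k < length W)%nat -> per W (Z.of_nat k) = nth k W d.
Proof.
  intros H. unfold per. rewrite Z.mod_small by lia. rewrite Nat2Z.id. reflexivity.
Qed.

Lemma per_mod W i : (0 < length W)%nat -> per W i = per W (i mod Z.of_nat (length W)).
Proof.
  intros H. unfold per. rewrite Z.mod_mod by lia. reflexivity.
Qed.

Lemma window_per W c : (0 < length W)%nat ->
  window (per W) (c * Z.of_nat (length W)) (length W) = W.
Proof.
  intros H. apply nth_ext with (d := d) (d' := d).
  - apply window_length.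
  - intros n Hn. rewrite window_length in Hn. rewrite window_nth by lia.
    rewrite Z.add_comm, per_add. apply per_nth; lia.
Qed.

Definition factor (u v : list A) : Prop := exists a b, v = a ++ u ++ b.

Lemma factor_refl u : factor u u.
Proof. exists [], []. rewrite app_nil_r. reflexivity. Qed.

Lemma factor_trans u v w : factor u v -> factor v w -> factor u w.
Proof.
  intros [a [b H1]] [c [e H2]]. subst. exists (c ++ a), (b ++ e).
  rewrite !app_assoc. reflexivity.
Qed.

Lemma factor_app_l u v : factor u (u ++ v).
Proof. exists [], v. reflexivity. Qed.
Lemma factor_app_r u v : factor u (v ++ u).
Proof. exists v, []. rewrite app_nil_r. reflexivity. Qed.

Lemma factor_window x s len u : factor u (window x s len) ->
  exists s', window x s' (length u) = u /\ s <= s' /\ s' + Z.of_nat (length u) <= s + Z.of_nat len.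
Proof.
  intros [a [b H]]. exists (s + Z.of_nat (length a)).
  assert (Hl : length (window x s len) = (length a + length u + length b)%nat)
    by (rewrite H, !length_app; lia).
  rewrite window_length in Hl. split; [| lia].
  rewrite (sub_window x s len) by lia. rewrite H.
  rewrite skipn_app, skipn_all2 by lia. replace (length a - length a)%nat with 0%nat by lia.
  simpl. rewrite firstn_app. rewrite firstn_all2 by lia.
  replace (length u - length u)%nat with 0%nat by lia. simpl. apply app_nil_r.
Qed.

Lemma factor_per W u : factor u W -> exists s, window (per W) s (length u) = u.
Proof.
  intros Hf. destruct (Nat.eq_dec (length W) 0) as [E|E].
  - destruct Hf as [a [b H]]. rewrite H, !length_app in E. assert (length u = 0%nat) by lia.
    exists 0. destruct u; [reflexivity | discriminate].
  - rewrite <- (window_per W 0) in Hf by lia.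
    destruct (factor_window _ _ _ _ Hf) as [s' [H _]]. exists s'. exact H.
Qed.

End Gen.
Arguments window {A}.
Arguments factor {A}.

Section Gen2.
Variable A : Type.
Variable d : A.

Lemma shiftn_shiftn (a b : Z) (x : config A) : shiftn a (shiftn b x) = shiftn (a + b) x.
Proof. apply functional_extensionality. intro i. unfold shiftn. f_equal. lia. Qed.

Lemma shiftn_0 (x : config A) : shiftn 0 x = x.
Proof. apply functional_extensionality. intro i. unfold shiftn. f_equal. lia. Qed.

Lemma invariant_shift (C : config A -> Prop) : invariant C ->
  forall n x, C x -> C (shiftn n x).
Proof.
  intros HC n. induction n using Z.peano_ind; intros x Hx.
  - rewrite shiftn_0. exact Hx.
  - replace (Z.succ n) with (1 + n) by lia. rewrite <- shiftn_shiftn.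
    apply (proj1 (HC _)). apply IHn. exact Hx.
  - apply (proj2 (HC _)). rewrite shiftn_shiftn. replace (1 + Z.pred n) with n by lia. apply IHn. exact Hx.
Qed.

Lemma sft_glue (Y : config A -> Prop) (F : list (list A)) (K : nat)
  (HF : forall x, Y x <-> (forall w i, In w F -> ~ occurs w x i))
  (HK : forall w, In w F -> (length w <= K)%nat) (x : config A) :
  (forall i, exists y j, Y y /\ window x i K = window y j K) -> Y x.
Proof.
  intros H. apply HF. intros w i Hw Hocc.
  destruct (H i) as [y [j [Hy Hwin]]].
  apply HF with (w := w) (i := j) in Hy; [| exact Hw]. apply Hy.
  intros k a Hk. assert (Hkl : (k < length w)%nat) by (apply nth_error_Some; congruence).
  pose proof (HK w Hw).
  rewrite <- (window_eq_pt A d x y i j K Hwin k) by lia. apply Hocc. exact Hk.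
Qed.

Lemma sft_shift (Y : config A -> Prop) (HY : SFT Y) n x : Y x -> Y (shiftn n x).
Proof.
  destruct HY as [F HF]. intros Hx. apply HF. intros w i Hw Hocc.
  apply HF with (w := w) (i := i + n) in Hx; [| exact Hw]. apply Hx.
  intros k a Hk. rewrite <- (Hocc k a Hk). unfold shiftn. f_equal. lia.
Qed.

Lemma phase_closed (L : Z) (HL : 0 < L) (Loc : Z -> config A -> Prop) (R : Z) (HR : 0 <= R)
  (Hloc : forall s x y, (forall k, 0 <= k <= R -> x (s + k) = y (s + k)) -> Loc s x -> Loc s y) :
  closed (fun x => exists t, forall n, Loc (t + n * L) x).
Proof.
  intros x Hx. apply NNPP. intros Hno.
  assert (H1 : forall t, exists n, ~ Loc (t + n * L) x).
  { intros t. apply not_all_ex_not. intros Hall. apply Hno. exists t. exact Hall. }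
  assert (HB : forall m : nat, exists B, forall t, 0 <= t < Z.of_nat m ->
             exists n, ~ Loc (t + n * L) x /\ Z.abs (t + n * L) + R <= B).
  { induction m as [|m IH].
    - exists 0. intros t Ht. lia.
    - destruct IH as [B HB]. destruct (H1 (Z.of_nat m)) as [n Hn].
      exists (Z.max B (Z.abs (Z.of_nat m + n * L) + R)). intros t Ht.
      destruct (Z.eq_dec t (Z.of_nat m)) as [->|Hne].
      + exists n. split; [exact Hn | lia].
      + destruct (HB t ltac:(lia)) as [n' [Hn' Hb]]. exists n'. split; [exact Hn' | lia]. }
  destruct (HB (Z.to_nat L)) as [B HB'].
  destruct (Hx (Z.to_nat (Z.abs B))) as [y [[t Ht] Hagree]].
  set (t' := t mod L).
  assert (Ht'r : 0 <= t' < L) by (apply Z.mod_pos_bound; lia).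
  destruct (HB' t' ltac:(lia)) as [n0 [Hn0 Hb0]].
  apply Hn0. apply (Hloc _ y x).
  - intros k Hk. unfold agree in Hagree. apply Hagree. rewrite Z2Nat.id by lia. lia.
  - replace (t' + n0 * L) with (t + (n0 - t / L) * L).
    + apply Ht.
    + unfold t'. rewrite (Z.div_mod t L) at 1 by lia. lia.
Qed.

Definition Rep (W : list A) (x : config A) (t : Z) : Prop :=
  forall n, window x (t + n * Z.of_nat (length W)) (length W) = W.

Lemma Rep_per W : (0 < length W)%nat -> Rep W (per A d W) 0.
Proof. intros H n. rewrite Z.add_0_l. apply window_per. exact H. Qed.

Lemma Rep_shift W x t m : Rep W x t -> Rep W (shiftn m x) (t - m).
Proof.
  intros H n. rewrite window_shift.
  replace (t - m + n * Z.of_nat (length W) + m) with (t + n * Z.of_nat (length W)) by lia. apply H.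
  exact d.
Qed.

Lemma Rep_eq W x t : (0 < length W)%nat -> Rep W x t -> x = shiftn (- t) (per A d W).
Proof.
  intros HW H. apply functional_extensionality. intro i. unfold shiftn.
  set (L := Z.of_nat (length W)).
  assert (HL : 0 < L) by (unfold L; lia).
  set (n := (i - t) / L). set (k := (i - t) mod L).
  assert (Hk : 0 <= k < L) by (apply Z.mod_pos_bound; lia).
  assert (Hi : i = t + n * L + Z.of_nat (Z.to_nat k)).
  { rewrite Z2Nat.id by lia. unfold n, k. pose proof (Z.div_mod (i - t) L ltac:(lia)). lia. }
  pose proof (window_eq_pt A d x (per A d W) (t + n * L) 0 (length W)) as Hp.
  rewrite Hi. rewrite (window_eq_pt A d x (per A d W) (t + n * L) 0 (length W)).
  - replace (t + n * L + Z.of_nat (Z.to_nat k) + - t) with (0 + Z.of_nat (Z.to_nat k) + n * L) by lia.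
    unfold L. rewrite per_add. reflexivity.
  - unfold L. rewrite (H n). replace 0 with (0 * Z.of_nat (length W)) by lia. rewrite window_per by exact HW.
    reflexivity.
  - unfold L in Hk. lia.
Qed.

Definition orbl (W : list A) : list (config A) :=
  map (fun k => shiftn (Z.of_nat k) (per A d W)) (seq 0 (length W)).

Lemma shift_per_mod W a : (0 < length W)%nat ->
  shiftn a (per A d W) = shiftn (a mod Z.of_nat (length W)) (per A d W).
Proof.
  intros HW. apply functional_extensionality. intro i. unfold shiftn.
  rewrite (per_mod A d W (i + a)) by exact HW. rewrite (per_mod A d W (i + _)) by exact HW.
  rewrite Z.add_mod_idemp_r by lia. reflexivity.
Qed.

Lemma in_orbl W a : (0 < length W)%nat -> In (shiftn a (per A d W)) (orbl W).
Proof.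
  intros HW. rewrite shift_per_mod by exact HW. unfold orbl. apply in_map_iff.
  exists (Z.to_nat (a mod Z.of_nat (length W))).
  assert (0 <= a mod Z.of_nat (length W) < Z.of_nat (length W)) by (apply Z.mod_pos_bound; lia).
  split.
  - rewrite Z2Nat.id by lia. reflexivity.
  - apply in_seq. lia.
Qed.

Lemma periodic_shift_per W a : (0 < length W)%nat -> periodic (shiftn a (per A d W)).
Proof.
  intros HW. exists (orbl W). intros y [n ->]. rewrite shiftn_shiftn. apply in_orbl. exact HW.
Qed.

Lemma Rep_closed W : (0 < length W)%nat -> closed (fun x => exists t, Rep W x t).
Proof.
  intros HW. unfold Rep.
  apply (phase_closed (Z.of_nat (length W)) ltac:(lia)
           (fun s x => window x s (length W) = W) (Z.of_nat (length W)) ltac:(lia)).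
  intros s x y Hxy Hx. etransitivity; [| exact Hx]. apply (window_ext A d). intros k Hk. symmetry. apply Hxy. lia.
Qed.

End Gen2.

Inductive ty := Qt (i : nat) | Mt.

Definition rr (j : nat) : nat := (3 * j + 5)%nat.

Definition gM (i : nat) : list ty := [Qt i; Qt i; Mt].

Definition expand (j : nat) (a : ty) : list ty :=
  match a with
  | Qt i => if (i <=? j)%nat then repeat (Qt i) (rr j) else repeat Mt (rr j)
  | Mt => Mt :: flat_map gM (seq 0 (S j)) ++ [Mt]
  end.

Definition allowed (a b : ty) : Prop := a = b \/ a = Mt \/ b = Mt.

Fixpoint chain (l : list ty) : Prop :=
  match l with
  | [] => True
  | a :: l' => match l' with [] => True | b :: _ => allowed a b /\ chain l' end
  end.

Lemma length_flat_map_unif {X Y : Type} (f : X -> list Y) (c : nat) l :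
  (forall x, length (f x) = c) -> length (flat_map f l) = (length l * c)%nat.
Proof.
  intros H. induction l as [|a l IH]; simpl; [reflexivity|].
  rewrite length_app, H, IH. lia.
Qed.

Lemma length_expand j a : length (expand j a) = rr j.
Proof.
  destruct a as [i|]; simpl.
  - destruct (i <=? j)%nat; apply repeat_length.
  - rewrite length_app. rewrite (length_flat_map_unif gM 3) by reflexivity.
    rewrite length_seq. simpl. unfold rr. lia.
Qed.

Lemma chain_repeat c n : chain (repeat c n).
Proof.
  induction n as [|n IH]; simpl; [trivial|]. destruct n; simpl; [trivial|].
  split; [left; reflexivity| exact IH].
Qed.

Lemma chain_join l1 x l2 : chain (l1 ++ [x]) -> chain (x :: l2) -> chain (l1 ++ x :: l2).
Proof.
  induction l1 as [|a l1 IH]; simpl; [tauto|].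
  destruct l1 as [|b l1].
  - simpl. intros [H1 _] H2. split; assumption.
  - simpl. intros [H1 H2] H3. split; [exact H1|]. apply IH; assumption.
Qed.

Lemma expandM_split l : exists G, Mt :: flat_map gM l = G ++ [Mt].
Proof.
  induction l as [|a l [G IH]].
  - exists []. reflexivity.
  - exists (Mt :: Qt a :: Qt a :: G). simpl. rewrite IH. reflexivity.
Qed.

Lemma chain_expandM_gen l : chain (Mt :: flat_map gM l ++ [Mt]).
Proof.
  induction l as [|a l IH].
  - simpl. split; [right; left; reflexivity | trivial].
  - simpl. split; [right; left; reflexivity|]. split; [left; reflexivity|].
    split; [right; right; reflexivity|]. exact IH.
Qed.

Lemma expand_head j a : exists y l, expand j a = y :: l.
Proof.
  destruct a as [i|]; simpl.
  - replace (rr j) with (S (3*j+4)) by (unfold rr; lia).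
    destruct (i <=? j)%nat; simpl; eexists; eexists; reflexivity.
  - eexists; eexists; reflexivity.
Qed.

Lemma chain_expand j a : chain (expand j a).
Proof.
  destruct a as [i|].
  - simpl. destruct (i <=? j)%nat; apply chain_repeat.
  - exact (chain_expandM_gen (seq 0 (S j))).
Qed.

Lemma chain_cons_head a y l : allowed a y -> chain (y :: l) -> chain (a :: y :: l).
Proof. intros H1 H2. simpl. split; assumption. Qed.

Lemma chain_expand_pair j a b : allowed a b -> chain (expand j a ++ expand j b).
Proof.
  intros Hab.
  destruct a as [i|].
  - destruct Hab as [<- | [Hc | ->]]; [| discriminate |].
    + simpl. destruct (i <=? j)%nat; rewrite <- repeat_app; apply chain_repeat.
    + assert (He : exists c, expand j (Qt i) = repeat c (rr j) /\ allowed c Mt).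
      { simpl. destruct (i <=? j)%nat; eexists; split; try reflexivity; right; right; reflexivity. }
      destruct He as [c [He Hc]]. rewrite He.
      replace (rr j) with (S (3 * j + 4)) by (unfold rr; lia).
      change (repeat c (S (3 * j + 4))) with (c :: repeat c (3 * j + 4)).
      rewrite repeat_cons. rewrite <- app_assoc.
      change ([c] ++ expand j Mt) with (c :: expand j Mt).
      apply chain_join.
      * rewrite <- repeat_cons. apply (chain_repeat c (S (3 * j + 4))).
      * destruct (expand_head j Mt) as [y [l Hyl]]. rewrite Hyl.
        apply chain_cons_head.
        -- simpl in Hyl. injection Hyl as <- _. exact Hc.
        -- rewrite <- Hyl. apply chain_expand.
  - change (expand j Mt) with (Mt :: flat_map gM (seq 0 (S j)) ++ [Mt]).
    rewrite <- app_comm_cons, <- app_assoc. change ([Mt] ++ expand j b) with (Mt :: expand j b).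
    destruct (expandM_split (seq 0 (S j))) as [G HG].
    replace (Mt :: flat_map gM (seq 0 (S j)) ++ Mt :: expand j b) with
      ((G ++ [Mt]) ++ Mt :: expand j b).
    2:{ rewrite <- HG. reflexivity. }
    apply chain_join.
    + rewrite <- HG. exact (chain_expandM_gen (seq 0 (S j))).
    + destruct (expand_head j b) as [y [l Hyl]]. rewrite Hyl.
      apply chain_cons_head.
      * right; left; reflexivity.
      * rewrite <- Hyl. apply chain_expand.
Qed.

Lemma chain_skipn k l : chain l -> chain (skipn k l).
Proof.
  revert l. induction k as [|k IH]; intros l H; simpl; [exact H|].
  destruct l as [|a l]; [trivial|]. apply IH.
  destruct l; simpl in *; tauto.
Qed.

Lemma skipn_flat_map_unif {X Y : Type} (f : X -> list Y) (c : nat) k l :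
  (forall x, length (f x) = c) -> skipn (k * c) (flat_map f l) = flat_map f (skipn k l).
Proof.
  intros H. revert l. induction k as [|k IH]; intros l; [reflexivity|].
  destruct l as [|a l].
  - simpl. apply skipn_nil.
  - simpl flat_map. replace (S k * c)%nat with (c + k * c)%nat by lia.
    rewrite skipn_app. rewrite H.
    rewrite skipn_all2 by (rewrite H; lia). replace (c + k * c - c)%nat with (k * c)%nat by lia.
    simpl. apply IH.
Qed.

Definition pow {X : Type} (W : list X) (k : nat) : list X := concat (repeat W k).

Lemma flat_map_repeat {X Y : Type} (f : X -> list Y) a n :
  flat_map f (repeat a n) = pow (f a) n.
Proof. unfold pow. induction n as [|n IH]; simpl; [reflexivity|]. rewrite IH. reflexivity. Qed.

Lemma length_pow {X : Type} (W : list X) k : length (pow W k) = (k * length W)%nat.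
Proof. unfold pow. induction k as [|k IH]; simpl; [reflexivity|]. rewrite length_app, IH. lia. Qed.

Lemma pow_mul {X : Type} (W : list X) a b : pow (pow W a) b = pow W (b * a).
Proof.
  unfold pow. induction b as [|b IH]; simpl; [reflexivity|].
  rewrite IH. rewrite repeat_app, concat_app. reflexivity.
Qed.

Section Levels.
Variable A : Type.
Variable d : A.
Variables P M : list A.
Hypothesis HPM : length M = length P.
Hypothesis HP0 : (0 < length P)%nat.

Fixpoint word (j : nat) (a : ty) : list A :=
  match j with
  | O => match a with Qt _ => P | Mt => M end
  | S j' => flat_map (word j') (expand j' a)
  end.

Fixpoint len (j : nat) : nat :=
  match j with O => length P | S j' => (rr j' * len j')%nat end.

Lemma length_word j a : length (word j a) = len j.
Proof.
  revert a. induction j as [|j IH]; intros a; simpl.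
  - destruct a; auto.
  - rewrite (length_flat_map_unif _ (len j)) by exact IH. rewrite length_expand. reflexivity.
Qed.

Lemma len_pos j : (0 < len j)%nat.
Proof. induction j as [|j IH]; simpl; [exact HP0|]. unfold rr. nia. Qed.

Lemma len_ge j : (S j <= len j)%nat.
Proof. induction j as [|j IH]; simpl; [lia|]. unfold rr. nia. Qed.

Definition good (j : nat) (v : list A) : Prop :=
  exists a b, allowed a b /\ v = word j a ++ word j b.

Definition Conc (j : nat) (x : config A) (t : Z) : Prop :=
  forall n : Z, good j (window x (t + n * Z.of_nat (len j)) (2 * len j)).

Definition Zs (x : config A) : Prop := forall j, exists t, Conc j x t.

Lemma Conc_down j x t : Conc (S j) x t -> Conc j x t.
Proof.
  intros H n.
  set (R := Z.of_nat (rr j)). set (Lj := Z.of_nat (len j)).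
  assert (HR : 2 <= R) by (unfold R, rr; lia).
  set (q := n / R). set (rm := n mod R).
  assert (Hrm : 0 <= rm < R) by (apply Z.mod_pos_bound; lia).
  assert (Hn : n = R * q + rm) by (apply Z.div_mod; lia).
  destruct (H q) as [a [b [Hab Hw]]].
  set (s' := t + q * Z.of_nat (len (S j))) in Hw.
  set (rmn := Z.to_nat rm).
  assert (Hpos : t + n * Lj = s' + Z.of_nat (rmn * len j)).
  { assert (Hr : Z.of_nat rmn = rm) by (unfold rmn; apply Z2Nat.id; lia).
    unfold s', Lj. simpl len. rewrite !Nat2Z.inj_mul. rewrite Hr. fold R. rewrite Hn. ring. }
  rewrite Hpos.
  assert (Hlen : (rmn * len j + 2 * len j <= 2 * len (S j))%nat).
  { simpl len. unfold rmn. assert (Z.to_nat rm < rr j)%nat by (unfold R in Hrm; lia). nia. }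
  rewrite (sub_window A d x s' (2 * len (S j)) (rmn * len j) (2 * len j) Hlen).
  rewrite Hw. simpl word. rewrite <- flat_map_app.
  rewrite (skipn_flat_map_unif _ (len j)) by apply length_word.
  set (e := expand j a ++ expand j b).
  assert (Hce : chain (skipn rmn e)) by (apply chain_skipn; apply chain_expand_pair; exact Hab).
  assert (Hle : (2 <= length (skipn rmn e))%nat).
  { rewrite length_skipn. unfold e. rewrite length_app, !length_expand.
    unfold rmn. unfold R in Hrm. lia. }
  destruct (skipn rmn e) as [|e0 [|e1 rest]] eqn:Es; simpl in Hle; try lia.
  exists e0, e1. split; [simpl in Hce; tauto|].
  simpl flat_map. rewrite app_assoc. rewrite firstn_app.
  rewrite length_app, !length_word. replace (2 * len j - (len j + len j))%nat with 0%nat by lia.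
  simpl. rewrite app_nil_r. apply firstn_all2. rewrite length_app, !length_word. lia.
Qed.

Lemma Conc_down_le j k x t : (j <= k)%nat -> Conc k x t -> Conc j x t.
Proof.
  intros H. induction H; [tauto|]. intros Hc. apply IHle. apply Conc_down. exact Hc.
Qed.

Lemma Conc_shift j x t m : Conc j x t -> Conc j (shiftn m x) (t - m).
Proof.
  intros H n. rewrite (window_shift A d).
  replace (t - m + n * Z.of_nat (len j) + m) with (t + n * Z.of_nat (len j)) by lia. apply H.
Qed.

Lemma Zs_shift m x : Zs x -> Zs (shiftn m x).
Proof. intros H j. destruct (H j) as [t Ht]. exists (t - m). apply Conc_shift. exact Ht. Qed.

Lemma Zs_invariant : invariant Zs.
Proof.
  intros x. split; intros H.
  - apply Zs_shift. exact H.
  - apply (Zs_shift (-1)) in H. rewrite (shiftn_shiftn A) in H. replace (-1 + 1) with 0 in H by lia. rewrite shiftn_0 in H.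
    exact H.
Qed.

Lemma Conc_closed j : closed (fun x => exists t, Conc j x t).
Proof.
  unfold Conc.
  apply (phase_closed A (Z.of_nat (len j)) ltac:(pose proof (len_pos j); lia)
           (fun s x => good j (window x s (2 * len j))) (Z.of_nat (2 * len j)) ltac:(lia)).
  intros s x y Hxy Hx. replace (window y s (2 * len j)) with (window x s (2 * len j)); [exact Hx|].
  apply (window_ext A d). intros k Hk. apply Hxy. lia.
Qed.

Lemma Zs_closed : closed Zs.
Proof.
  intros x Hx j. apply Conc_closed. intros N. destruct (Hx N) as [y [Hy Ha]].
  exists y. split; [apply Hy | exact Ha].
Qed.

Lemma window_pow W x t (HW : (0 < length W)%nat) :
  Rep A W x t -> forall k m, window x (t + m * Z.of_nat (length W)) (k * length W) = pow W k.
Proof.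
  intros H k. induction k as [|k IH]; intros m; [reflexivity|].
  simpl mult. rewrite (window_app A d). rewrite H. change (pow W (S k)) with (W ++ pow W k). f_equal.
  replace (t + m * Z.of_nat (length W) + Z.of_nat (length W)) with (t + (m + 1) * Z.of_nat (length W)) by lia.
  apply IH.
Qed.

Lemma Rep_pow W x t k : (0 < length W)%nat -> Rep A W x t -> Rep A (pow W k) x t.
Proof.
  intros HW H n. rewrite length_pow.
  replace (t + n * Z.of_nat (k * length W)) with (t + (n * Z.of_nat k) * Z.of_nat (length W)) by lia.
  apply window_pow; assumption.
Qed.

Lemma Conc_of_Rep j a x t : allowed a a -> Rep A (word j a) x t -> Conc j x t.
Proof.
  intros Ha H n. exists a, a. split; [exact Ha|].
  replace (2 * len j)%nat with (len j + len j)%nat by lia.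
  rewrite (window_app A d). rewrite <- (length_word j a).
  rewrite H.
  replace (t + n * Z.of_nat (length (word j a)) + Z.of_nat (length (word j a)))
    with (t + (n + 1) * Z.of_nat (length (word j a))) by lia.
  rewrite H. reflexivity.
Qed.

Lemma word_Q_succ i j : (i <= j)%nat -> word (S j) (Qt i) = pow (word j (Qt i)) (rr j).
Proof.
  intros H. change (flat_map (word j) (expand j (Qt i)) = pow (word j (Qt i)) (rr j)).
  assert (E : (i <=? j)%nat = true) by (apply Nat.leb_le; exact H).
  unfold expand. rewrite E. apply flat_map_repeat.
Qed.

Lemma word_Q_high i j : (j <= i)%nat -> word j (Qt i) = word j (Qt j).
Proof.
  intros H. destruct j as [|j]; [reflexivity|].
  change (flat_map (word j) (expand j (Qt i)) = flat_map (word j) (expand j (Qt (S j)))).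
  assert (E1 : (i <=? j)%nat = false) by (apply Nat.leb_gt; lia).
  assert (E2 : (S j <=? j)%nat = false) by (apply Nat.leb_gt; lia).
  unfold expand. rewrite E1, E2. reflexivity.
Qed.

Lemma Rep_word_Q i j x t : (i <= j)%nat -> Rep A (word i (Qt i)) x t -> Rep A (word j (Qt i)) x t.
Proof.
  intros H. induction H; [tauto|]. intros Hr. rewrite word_Q_succ by exact H.
  apply Rep_pow; [rewrite length_word; apply len_pos | apply IHle; exact Hr].
Qed.

Definition Pw (i : nat) : list A := word i (Qt i).

Lemma Zs_per i : Zs (per A d (Pw i)).
Proof.
  assert (HR : Rep A (Pw i) (per A d (Pw i)) 0)
    by (apply Rep_per; unfold Pw; rewrite length_word; apply len_pos).
  intros j. exists 0. destruct (Nat.le_gt_cases i j) as [Hij|Hij].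
  - apply (Conc_of_Rep j (Qt i)); [left; reflexivity|]. apply Rep_word_Q; assumption.
  - apply (Conc_down_le j i); [lia|]. apply (Conc_of_Rep i (Qt i)); [left; reflexivity|]. exact HR.
Qed.

End Levels.

Lemma expandM_at j i : (i <= j)%nat ->
  exists G, expand j Mt = G ++ Mt :: Qt i :: Qt i :: Mt :: flat_map gM (seq (S i) (j - i)) ++ [Mt].
Proof.
  intros H. destruct (expandM_split (seq 0 i)) as [G HG]. exists G.
  change (expand j Mt) with (Mt :: flat_map gM (seq 0 (S j)) ++ [Mt]).
  replace (S j) with (i + S (j - i))%nat by lia. rewrite seq_app. simpl (0 + i)%nat.
  rewrite flat_map_app. rewrite <- app_assoc. rewrite app_comm_cons. rewrite HG.
  rewrite <- app_assoc. simpl. reflexivity.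
Qed.

Lemma pair_in_expand j a b : allowed a b ->
  (forall i, a = Qt i -> (i <= j)%nat) -> (forall i, b = Qt i -> (i <= j)%nat) ->
  exists pre post, expand j Mt = pre ++ a :: b :: post.
Proof.
  intros Hab Ha Hb.
  destruct a as [i|]; destruct b as [i'|].
  - destruct Hab as [E|[E|E]]; try discriminate. injection E as <-.
    destruct (expandM_at j i (Ha i eq_refl)) as [G HG]. rewrite HG.
    exists (G ++ [Mt]), (Mt :: flat_map gM (seq (S i) (j - i)) ++ [Mt]).
    rewrite <- app_assoc. reflexivity.
  - destruct (expandM_at j i (Ha i eq_refl)) as [G HG]. rewrite HG.
    exists (G ++ [Mt; Qt i]), (flat_map gM (seq (S i) (j - i)) ++ [Mt]).
    rewrite <- app_assoc. reflexivity.
  - destruct (expandM_at j i' (Hb i' eq_refl)) as [G HG]. rewrite HG.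
    exists G, (Qt i' :: Mt :: flat_map gM (seq (S i') (j - i')) ++ [Mt]). reflexivity.
  - destruct (expandM_at j j (le_n j)) as [G HG]. rewrite HG.
    rewrite Nat.sub_diag. simpl.
    exists (G ++ [Mt; Qt j; Qt j]), []. rewrite <- app_assoc. reflexivity.
Qed.

Lemma app_eq_len {X : Type} (x1 x2 y1 y2 : list X) :
  x1 ++ x2 = y1 ++ y2 -> length x1 = length y1 -> x1 = y1 /\ x2 = y2.
Proof.
  revert y1. induction x1 as [|a x1 IH]; intros y1 H Hl; destruct y1 as [|b y1]; simpl in *; try discriminate.
  - split; auto.
  - injection H as -> H. injection Hl as Hl. destruct (IH y1 H Hl) as [-> ->]. split; reflexivity.
Qed.

Section CAMproof.
Variable A : Type.
Variable d : A.
Variables P M : list A.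
Hypothesis HPM : length M = length P.
Hypothesis HP0 : (0 < length P)%nat.
Hypothesis HnotOcc : forall r, window (per A d P) r (length P) <> M.

Notation word := (word A P M).
Notation len := (len A P).
Notation Zs := (Zs A P M).
Notation Conc := (Conc A P M).

Definition nrm (j : nat) (a : ty) : ty := match a with Qt i => Qt (Nat.min i j) | Mt => Mt end.

Lemma word_nrm j a : word j (nrm j a) = word j a.
Proof.
  destruct a as [i|]; [|reflexivity]. simpl.
  destruct (Nat.le_ge_cases i j) as [H|H].
  - rewrite Nat.min_l by exact H. reflexivity.
  - rewrite Nat.min_r by exact H. symmetry. apply word_Q_high; assumption.
Qed.

Lemma factor_flat_map {X Y : Type} (f : X -> list Y) pre a b post :
  factor (f a ++ f b) (flat_map f (pre ++ a :: b :: post)).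
Proof.
  rewrite flat_map_app. simpl. exists (flat_map f pre), (flat_map f post).
  rewrite !app_assoc. reflexivity.
Qed.

Lemma F1 j a b : allowed a b -> factor (word j a ++ word j b) (word (S j) Mt).
Proof.
  intros Hab. rewrite <- (word_nrm j a), <- (word_nrm j b).
  assert (Hn : allowed (nrm j a) (nrm j b)).
  { destruct Hab as [<-|[->| ->]]; [left; reflexivity | right; left; reflexivity | right; right; reflexivity]. }
  destruct (pair_in_expand j (nrm j a) (nrm j b) Hn) as [pre [post E]].
  - intros i Hi. destruct a; simpl in Hi; [injection Hi as <-; lia | discriminate].
  - intros i Hi. destruct b; simpl in Hi; [injection Hi as <-; lia | discriminate].
  - change (word (S j) Mt) with (flat_map (word j) (expand j Mt)). rewrite E. apply factor_flat_map.
Qed.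

Lemma F_succ j : factor (word j Mt) (word (S j) Mt).
Proof.
  change (word (S j) Mt) with (flat_map (word j) (expand j Mt)). simpl.
  apply factor_app_l.
Qed.

Lemma F2 j J : (j <= J)%nat -> factor (word j Mt) (word J Mt).
Proof.
  intros H. induction H; [apply factor_refl|]. eapply factor_trans; [exact IHle | apply F_succ].
Qed.

Lemma F3 j : factor (word j Mt) (Pw A P M (S j)).
Proof.
  unfold Pw. change (word (S j) (Qt (S j))) with (flat_map (word j) (expand j (Qt (S j)))).
  unfold expand. assert (E : (S j <=? j)%nat = false) by (apply Nat.leb_gt; lia). rewrite E.
  replace (rr j) with (S (3 * j + 4)) by (unfold rr; lia). simpl. apply factor_app_l.
Qed.

Lemma word_Q0 j : exists c, (S j <= c)%nat /\ word j (Qt 0) = pow P c.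
Proof.
  induction j as [|j [c [Hc E]]].
  - exists 1%nat. split; [lia|]. simpl. unfold pow. simpl. rewrite app_nil_r. reflexivity.
  - exists (rr j * c)%nat. split; [unfold rr; nia|].
    rewrite word_Q_succ by lia. rewrite E. apply pow_mul.
Qed.

Lemma len_word_pos j a : (0 < length (word j a))%nat.
Proof. rewrite (length_word A P M HPM). apply (len_pos A P M HPM HP0). Qed.

Lemma Zs_window z : Zs z -> forall N : nat,
  exists j s l, s <= - Z.of_nat N /\ Z.of_nat N < s + Z.of_nat l /\ factor (window z s l) (word (S j) Mt).
Proof.
  intros Hz N. set (j := (2 * N)%nat). destruct (Hz j) as [t Ht].
  pose proof (len_ge A P M HPM HP0 j) as Hlj.
  set (Lj := Z.of_nat (len j)) in *.
  assert (HLj : 2 * Z.of_nat N + 1 <= Lj) by (unfold Lj, j in *; lia).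
  pose proof (Z.div_mod (- Z.of_nat N - t) Lj ltac:(lia)) as Hdm.
  pose proof (Z.mod_pos_bound (- Z.of_nat N - t) Lj ltac:(lia)) as Hmb.
  remember ((- Z.of_nat N - t) / Lj) as n. remember ((- Z.of_nat N - t) mod Lj) as r.
  exists j, (t + n * Lj), (2 * len j)%nat.
  split; [|split].
  - lia.
  - rewrite Nat2Z.inj_mul. fold Lj. lia.
  - destruct (Ht n) as [a [b [Hab Hw]]]. fold Lj in Hw. rewrite Hw. apply F1. exact Hab.
Qed.

Lemma agree_of_window (c z : config A) s s'' l (N : nat) :
  window c s'' l = window z s l -> s <= - Z.of_nat N -> Z.of_nat N < s + Z.of_nat l ->
  agree z (shiftn (s'' - s) c) N.
Proof.
  intros Hw H1 H2 i Hi. unfold shiftn.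
  pose proof (window_eq_pt A d c z s'' s l Hw (Z.to_nat (i - s)) ltac:(lia)) as E.
  rewrite Z2Nat.id in E by lia. replace (i + (s'' - s)) with (s'' + (i - s)) by lia.
  rewrite E. f_equal. lia.
Qed.

Lemma occ_trans (c : config A) u W s' : factor u W -> window c s' (length W) = W ->
  exists s'', window c s'' (length u) = u.
Proof.
  intros Hf Hw. rewrite <- Hw in Hf. destruct (factor_window A d c s' (length W) u Hf) as [s'' [H _]].
  exists s''. exact H.
Qed.

Lemma absorb (C : config A -> Prop) : closed C -> invariant C ->
  (forall J, exists c, C c /\ exists s, window c s (len J) = word J Mt) ->
  forall z, Zs z -> C z.
Proof.
  intros Hcl Hinv HJ z Hz. apply Hcl. intros N.
  destruct (Zs_window z Hz N) as [j [s [l [H1 [H2 Hf]]]]].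
  destruct (HJ (S j)) as [c [Hc [s' Hs']]].
  rewrite <- (length_word A P M HPM (S j) Mt) in Hs'.
  destruct (occ_trans c _ _ s' Hf Hs') as [s'' Hs''].
  rewrite window_length in Hs''.
  exists (shiftn (s'' - s) c). split.
  - apply invariant_shift; assumption.
  - apply (agree_of_window c z s s'' l N); assumption.
Qed.

Lemma per_witness (z : config A) (N : nat) : Zs z -> exists J s'' s, 
  agree z (shiftn (s'' - s) (per A d (Pw A P M (S J)))) N /\ 
  forall J', (J <= J')%nat -> exists s3, agree z (shiftn (s3 - s) (per A d (Pw A P M (S J')))) N.
Proof.
  intros Hz. destruct (Zs_window z Hz N) as [j [s [l [H1 [H2 Hf]]]]].
  assert (Hgen : forall J', (S j <= J')%nat -> exists s3,
      agree z (shiftn (s3 - s) (per A d (Pw A P M (S J')))) N).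
  { intros J' HJ'. assert (Hf2 : factor (window z s l) (Pw A P M (S J'))).
    { eapply factor_trans; [exact Hf|]. eapply factor_trans; [apply F2; exact HJ'| apply F3]. }
    destruct (factor_per A d _ _ Hf2) as [s3 Hs3]. rewrite window_length in Hs3.
    exists s3. apply (agree_of_window _ z s s3 l N); assumption. }
  destruct (Hgen (S j) (le_n _)) as [s3 Hs3].
  exists (S j), s3, s. split; [exact Hs3|]. intros J' HJ'. apply Hgen. exact HJ'.
Qed.

Lemma Zs_transitive : transitive Zs.
Proof.
  intros U V [HUs HU] [HVs HV] [x Hx] [y Hy].
  destruct (HU x Hx) as [N1 HN1]. destruct (HV y Hy) as [N2 HN2].
  destruct (per_witness x N1 (HUs x Hx)) as [J1 [_ [s1 [_ G1]]]].
  destruct (per_witness y N2 (HVs y Hy)) as [J2 [_ [s2 [_ G2]]]].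
  set (J := Nat.max J1 J2).
  destruct (G1 J ltac:(lia)) as [p1 A1]. destruct (G2 J ltac:(lia)) as [p2 A2].
  set (q := per A d (Pw A P M (S J))).
  exists ((p2 - s2) - (p1 - s1)), (shiftn (p1 - s1) q). split.
  - apply HN1; [apply (Zs_shift A d); try assumption; apply Zs_per; assumption | exact A1].
  - rewrite (shiftn_shiftn A). replace (p2 - s2 - (p1 - s1) + (p1 - s1)) with (p2 - s2) by lia.
    apply HN2; [apply (Zs_shift A d); try assumption; apply Zs_per; assumption | exact A2].
Qed.

Lemma Zs_dense_periodic : dense_periodic Zs.
Proof.
  intros U [HUs HU] [x Hx]. destruct (HU x Hx) as [N1 HN1].
  destruct (per_witness x N1 (HUs x Hx)) as [J1 [p1 [s1 [A1 _]]]].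
  exists (shiftn (p1 - s1) (per A d (Pw A P M (S J1)))). split.
  - apply HN1; [apply (Zs_shift A d); try assumption; apply Zs_per; assumption | exact A1].
  - apply periodic_shift_per. unfold Pw. apply len_word_pos.
Qed.

Lemma Zs_faithful : faithful Zs.
Proof.
  intros n Hn. apply NNPP. intros Hn0.
  set (Nn := Z.to_nat (Z.abs n)).
  destruct (word_Q0 Nn) as [c [Hc Ec]].
  set (q := per A d (Pw A P M (S (S Nn)))).
  assert (Hq1 : Zs q) by (apply Zs_per; assumption).
  assert (Hqn : forall i, q (i + n) = q i).
  { intros i. pose proof (Hn q Hq1) as E. change (shiftn n q i = q i). rewrite E. reflexivity. }
  assert (Hqc : forall c0 i, q (i + c0 * n) = q i).
  { intros c0. induction c0 using Z.peano_ind; intros i.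
    - f_equal. lia.
    - replace (i + Z.succ c0 * n) with ((i + c0 * n) + n) by lia. rewrite Hqn. apply IHc0.
    - rewrite <- (Hqn (i + Z.pred c0 * n)).
      replace (i + Z.pred c0 * n + n) with (i + c0 * n) by lia. apply IHc0. }
  assert (FP : factor (pow P c) (Pw A P M (S (S Nn)))).
  { rewrite <- Ec. eapply factor_trans; [| apply F3].
    eapply factor_trans; [apply factor_app_l | apply (F1 Nn (Qt 0) (Qt 0)); left; reflexivity]. }
  assert (FM : factor M (Pw A P M (S (S Nn)))).
  { eapply factor_trans; [| apply F3]. apply (F2 0 (S Nn)); lia. }
  destruct (factor_per A d _ _ FP) as [s1 Hs1]. destruct (factor_per A d _ _ FM) as [s2 Hs2].
  fold q in Hs1, Hs2. rewrite length_pow in Hs1.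
  set (Nz := Z.abs n).
  assert (HNz : 0 < Nz) by (unfold Nz; lia).
  set (e := (s2 - s1) mod Nz). set (qd := (s2 - s1) / Nz).
  assert (He : 0 <= e < Nz) by (apply Z.mod_pos_bound; lia).
  assert (Hdm : s2 - s1 = Nz * qd + e) by (apply Z.div_mod; lia).
  assert (Hmul : exists c0, Nz * qd = c0 * n).
  { unfold Nz. destruct (Z.abs_eq_or_opp n) as [E|E]; rewrite E; [exists qd | exists (- qd)]; ring. }
  destruct Hmul as [c0 Hc0].
  apply (HnotOcc e).
  rewrite <- Hs2. rewrite HPM.
  apply (window_ext A d). intros k Hk.
  replace (s2 + Z.of_nat k) with ((s1 + (e + Z.of_nat k)) + c0 * n) by lia.
  rewrite Hqc.
  assert (Hek : (Z.to_nat (e + Z.of_nat k) < c * length P)%nat).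
  { unfold Nz, Nn in *. nia. }
  pose proof (window_eq_pt A d q (per A d P) s1 0 (c * length P)) as Hwp.
  rewrite <- (window_pow A d P M HPM HP0 P (per A d P) 0 HP0 (Rep_per A d P HP0) c 0) in Hs1.
  rewrite Z.add_0_l, Z.mul_0_l in Hs1.
  pose proof (Hwp Hs1 (Z.to_nat (e + Z.of_nat k)) Hek) as E2.
  rewrite Z2Nat.id in E2 by lia. rewrite E2. f_equal; lia.
Qed.

Lemma case_lemma j x t : Conc j x t -> (forall s, window x s (len j) <> word j Mt) ->
  exists i, Rep A (word j (Qt i)) x t.
Proof.
  intros Hc Hno.
  set (L := len j).
  set (B := fun n => window x (t + n * Z.of_nat L) L).
  assert (Hstep : forall n, B n = B (n + 1) /\ exists i, B n = word j (Qt i)).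
  { intros n. destruct (Hc n) as [a [b [Hab Hw]]].
    replace (2 * len j)%nat with (len j + len j)%nat in Hw by lia.
    rewrite (window_app A d) in Hw.
    assert (E1 : B n = word j a /\ B (n + 1) = word j b).
    { unfold B, L. replace (t + (n + 1) * Z.of_nat (len j)) with (t + n * Z.of_nat (len j) + Z.of_nat (len j)) by lia.
      apply app_eq_len in Hw; [exact Hw|]. rewrite window_length, (length_word A P M HPM). reflexivity. }
    destruct E1 as [E1 E2].
    assert (Ha : a <> Mt). { intros ->. apply (Hno (t + n * Z.of_nat L)). exact E1. }
    assert (Hb : b <> Mt). { intros ->. apply (Hno (t + (n + 1) * Z.of_nat L)). exact E2. }
    destruct Hab as [<-|[?|?]]; try contradiction.
    split; [congruence|]. destruct a as [i|]; [exists i; exact E1 | contradiction]. }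
  destruct (proj2 (Hstep 0)) as [i Hi]. exists i.
  assert (Hall : forall n, B n = B 0).
  { intros n. induction n using Z.peano_ind.
    - reflexivity.
    - rewrite <- IHn. replace (Z.succ n) with (n + 1) by lia. symmetry. apply Hstep.
    - rewrite <- IHn. replace n with (Z.pred n + 1) at 2 by lia. apply Hstep. }
  intros n. rewrite (length_word A P M HPM). fold L. change (B n = word j (Qt i)). rewrite Hall. exact Hi.
Qed.

Lemma Zs_almost (C : config A -> Prop) : (forall x, C x -> Zs x) -> closed C -> invariant C ->
  (exists x, Zs x /\ ~ C x) -> finite_set C.
Proof.
  intros Hsub Hcl Hinv [z0 [Hz0 Hnz0]].
  assert (HJ : exists J, forall c, C c -> forall s, window c s (len J) <> word J Mt).
  { apply NNPP. intros Hno. apply Hnz0. apply (absorb C Hcl Hinv); [|exact Hz0].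
    intros J. apply NNPP. intros Hno2. apply Hno. exists J. intros c Hc s Hs.
    apply Hno2. exists c. split; [exact Hc|]. exists s. exact Hs. }
  destruct HJ as [J HJ].
  exists (flat_map (fun i => orbl A d (word J (Qt i))) (seq 0 (S J))).
  intros c Hc. destruct (Hsub c Hc J) as [t Ht].
  destruct (case_lemma J c t Ht (HJ c Hc)) as [i Hi].
  rewrite <- (word_nrm J (Qt i)) in Hi. simpl in Hi.
  apply in_flat_map. exists (Nat.min i J). split.
  - apply in_seq. lia.
  - rewrite (Rep_eq A d _ c t) by (try apply len_word_pos; exact Hi). apply in_orbl. apply len_word_pos.
Qed.

Lemma Zs_CAM : CAM Zs.
Proof.
  split; [apply Zs_transitive|]. split; [apply Zs_faithful|]. split; [apply Zs_dense_periodic|].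
  intros C Hsub Hcl Hinv Hex. apply Zs_almost; assumption.
Qed.

End CAMproof.

Section Base.
Variable A : Type.
Variable d : A.

Lemma nth_pow_lt (W : list A) k0 k : (k < length W)%nat -> (1 <= k0)%nat -> nth k (pow W k0) d = nth k W d.
Proof.
  intros H1 H2. destruct k0 as [|k0]; [lia|]. unfold pow. simpl. apply app_nth1. exact H1.
Qed.

Lemma per_pow (W : list A) k : (0 < length W)%nat -> (1 <= k)%nat -> per A d (pow W k) = per A d W.
Proof.
  intros HW Hk.
  assert (HR : Rep A (pow W k) (per A d W) 0).
  { apply (Rep_pow A d W W eq_refl HW); [exact HW | apply Rep_per; exact HW]. }
  apply (Rep_eq A d) in HR; [| rewrite length_pow; nia].
  rewrite HR. replace (- 0) with 0 by lia. symmetry. apply shiftn_0.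
Qed.

Lemma cyl_relopen (Y : config A -> Prop) (l : nat) (v : list A) :
  relopen Y (fun z => Y z /\ window z 0 l = v).
Proof.
  split; [intros x [Hx _]; exact Hx|].
  intros x [Hx Hv]. exists l. intros y Hy Ha. split; [exact Hy|].
  rewrite <- Hv. apply (window_ext A d). intros k Hk. apply Ha. lia.
Qed.

Variable Y : config A -> Prop.
Variable F : list (list A).
Hypothesis HF : forall x, Y x <-> (forall w i, In w F -> ~ occurs w x i).
Variable K : nat.
Hypothesis HK : forall w, In w F -> (length w <= K)%nat.
Hypothesis HK0 : (0 < K)%nat.

Lemma loop_lemma z (l : nat) : Y z -> window z 0 K = window z (Z.of_nat l) K -> (K <= l)%nat ->
  Y (per A d (window z 0 l)).
Proof.
  intros Hz Hs Hl. apply (sft_glue A d Y F K HF HK). intros i.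
  exists z, (i mod Z.of_nat l). split; [exact Hz|].
  assert (Hr := Z.mod_pos_bound i (Z.of_nat l) ltac:(lia)).
  apply (window_ext A d). intros k Hk.
  set (p := window z 0 l).
  assert (Hpl : length p = l) by apply window_length.
  rewrite (per_mod A d p) by lia. rewrite Hpl.
  rewrite <- Z.add_mod_idemp_l by lia.
  set (r := i mod Z.of_nat l).
  destruct (Z_lt_le_dec (r + Z.of_nat k) (Z.of_nat l)) as [Hlt|Hge].
  - rewrite Z.mod_small by lia.
    replace (r + Z.of_nat k) with (Z.of_nat (Z.to_nat (r + Z.of_nat k))) by lia.
    rewrite per_nth by lia.
    unfold p. rewrite window_nth by lia. f_equal; lia.
  - replace (r + Z.of_nat k) with (Z.of_nat (Z.to_nat (r + Z.of_nat k - Z.of_nat l)) + 1 * Z.of_nat l) by lia.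
    rewrite Z_mod_plus_full. rewrite Z.mod_small by lia. rewrite per_nth by lia.
    unfold p. rewrite window_nth by lia.
    pose proof (window_eq_pt A d z z 0 (Z.of_nat l) K Hs (Z.to_nat (r + Z.of_nat k - Z.of_nat l)) ltac:(lia)) as E.
    rewrite E. f_equal. lia.
Qed.

Lemma base_in_Y (P M : list A) (HPM : length M = length P) (HP0 : (0 < length P)%nat)
  (HKP : (K <= length P)%nat) (HYP : Y (per A d P)) (HYM : Y (per A d M))
  (Hpre : forall k, (k < K)%nat -> nth k P d = nth k M d) :
  forall x, Zs A P M x -> Y x.
Proof.
  intros x Hx. destruct (Hx 0%nat) as [t Ht].
  apply (sft_glue A d Y F K HF HK). intros i.
  set (L := Z.of_nat (length P)).
  assert (HL : 0 < L) by (unfold L; lia).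
  pose proof (Z.div_mod (i - t) L ltac:(lia)) as Hdm.
  pose proof (Z.mod_pos_bound (i - t) L HL) as Hmb.
  remember ((i - t) / L) as n. remember ((i - t) mod L) as o.
  destruct (Ht n) as [a [b [Hab Hw]]]. simpl len in Hw. simpl word in Hw.
  set (B := match a with Qt _ => P | Mt => M end) in Hw.
  set (B' := match b with Qt _ => P | Mt => M end) in Hw.
  assert (HB : Y (per A d B) /\ length B = length P /\ forall k, (k < K)%nat -> nth k B' d = nth k B d).
  { unfold B, B'. destruct a, b; repeat split; auto; intros k Hk; rewrite Hpre by exact Hk; auto;
    symmetry; apply Hpre; exact Hk. }
  destruct HB as [HYB [HBl HBB]].
  assert (HB'l : length B' = length P) by (unfold B'; destruct b; auto).
  exists (per A d B), o. split; [exact HYB|].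
  apply (window_ext A d). intros k Hk.
  assert (Hxs : forall m, (m < 2 * length P)%nat -> x (t + n * L + Z.of_nat m) = nth m (B ++ B') d).
  { intros m Hm. rewrite <- Hw. rewrite window_nth by exact Hm. reflexivity. }
  replace (i + Z.of_nat k) with (t + n * L + Z.of_nat (Z.to_nat (o + Z.of_nat k))) by lia.
  rewrite Hxs by lia.
  destruct (Z_lt_le_dec (o + Z.of_nat k) L) as [Hlt|Hge].
  - rewrite app_nth1 by lia.
    replace (o + Z.of_nat k) with (Z.of_nat (Z.to_nat (o + Z.of_nat k))) by lia.
    rewrite per_nth by lia. rewrite !Nat2Z.id. reflexivity.
  - rewrite app_nth2 by lia. rewrite HBB by lia.
    replace (o + Z.of_nat k) with (Z.of_nat (Z.to_nat (o + Z.of_nat k) - length B) + 1 * Z.of_nat (length B)) by lia.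
    rewrite per_add. rewrite per_nth by lia. f_equal. lia.
Qed.

End Base.

Lemma bound_list {A : Type} (F : list (list A)) : exists K, (0 < K)%nat /\ forall w, In w F -> (length w <= K)%nat.
Proof.
  induction F as [|w F [K [HK0 HK]]].
  - exists 1%nat. split; [lia | intros w []].
  - exists (Nat.max K (length w)). split; [lia|]. intros w' [<-|Hw']; [lia|]. specialize (HK w' Hw'). lia.
Qed.

Theorem theorem2p9 (A : Type) (HA : exists l : list A, forall a : A, In a l)
  (Y : config A -> Prop) (HY : SFT Y) (Hinf : ~ finite_set Y) (Hmix : mixing Y) :
  exists Zs : config A -> Prop,
    (forall x, Zs x -> Y x) /\ closed Zs /\ invariant Zs /\ CAM Zs.
Proof.
  pose proof HY as [F HF].
  destruct (bound_list F) as [K [HK0 HK]].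
  destruct (classic (exists y, Y y)) as [[y0 Hy0]|Hne].
  2:{ exfalso. apply Hinf. exists []. intros x Hx. apply Hne. exists x. exact Hx. }
  set (d := y0 0).
  set (s := window y0 0 K).
  set (Us := fun z => Y z /\ window z 0 K = s).
  assert (HUs : relopen Y Us) by apply (cyl_relopen A d).
  assert (HUs0 : nonempty Us) by (exists y0; split; [exact Hy0 | reflexivity]).
  destruct (Hmix Us Us HUs HUs HUs0 HUs0) as [N0 HN0].
  set (l := (N0 + K)%nat).
  destruct (HN0 l ltac:(lia)) as [z [[Hz Hzs] [_ Hzl]]].
  rewrite (window_shift A d), Z.add_0_l in Hzl.
  set (p := window z 0 l).
  assert (Hpl : length p = l) by apply window_length.
  assert (Yp : Y (per A d p)).
  { apply (loop_lemma A d Y F HF K HK HK0); [exact Hz | rewrite Hzs, Hzl; reflexivity | lia]. }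
  assert (Hp0 : (0 < length p)%nat) by lia.
  assert (Hy1 : exists y1, Y y1 /\ ~ exists t, Rep A p y1 t).
  { apply NNPP. intros Hno. apply Hinf. exists (orbl A d p). intros x Hx.
    destruct (classic (exists t, Rep A p x t)) as [[t Ht]|Hn].
    - rewrite (Rep_eq A d p x t Hp0 Ht). apply in_orbl. exact Hp0.
    - exfalso. apply Hno. exists x. split; assumption. }
  destruct Hy1 as [y1 [Hy1 Hy1n]].
  assert (HN : exists N, forall y, (exists t, Rep A p y t) -> ~ agree y1 y N).
  { apply NNPP. intros Hno. apply Hy1n. apply (Rep_closed A d p Hp0). intros N.
    apply NNPP. intros Hno2. apply Hno. exists N. intros y Hy Ha. apply Hno2. exists y. split; assumption. }
  destruct HN as [N HN].
  set (N' := (N + K)%nat).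
  set (lw := (2 * N' + 1)%nat).
  set (w := window y1 (- Z.of_nat N') lw).
  assert (HW : forall r, window (per A d p) r lw <> w).
  { intros r E. apply (HN (shiftn (r + Z.of_nat N') (per A d p))).
    - exists (0 - (r + Z.of_nat N')). apply Rep_shift; [exact d|]. apply Rep_per. exact Hp0.
    - intros i Hi. unfold shiftn.
      pose proof (window_eq_pt A d _ _ _ _ _ E (Z.to_nat (i + Z.of_nat N')) ltac:(lia)) as E2.
      rewrite Z2Nat.id in E2 by lia. replace (i + (r + Z.of_nat N')) with (r + (i + Z.of_nat N')) by lia.
      rewrite E2. f_equal; lia. }
  set (V := fun z => Y z /\ window z 0 lw = w).
  assert (HV : relopen Y V) by apply (cyl_relopen A d).
  assert (HV0 : nonempty V).
  { exists (shiftn (- Z.of_nat N') y1). split.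
    - apply sft_shift; assumption.
    - rewrite (window_shift A d). rewrite Z.add_0_l. reflexivity. }
  destruct (Hmix Us V HUs HV HUs0 HV0) as [N1 HN1].
  set (n1 := (N1 + K)%nat).
  destruct (HN1 n1 ltac:(lia)) as [z1 [[Hz1 Hz1s] [_ Hz1w]]].
  rewrite (window_shift A d), Z.add_0_l in Hz1w.
  destruct (Hmix V Us HV HUs HV0 HUs0) as [N2 HN2].
  set (n2 := (N2 + lw)%nat).
  destruct (HN2 n2 ltac:(lia)) as [z2 [[Hz2 Hz2w] [_ Hz2s]]].
  rewrite (window_shift A d), Z.add_0_l in Hz2s.
  assert (Ez12 : forall m, (m < lw)%nat -> z1 (Z.of_nat n1 + Z.of_nat m) = z2 (0 + Z.of_nat m)).
  { apply (window_eq_pt A d). rewrite Hz1w, Hz2w. reflexivity. }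
  set (g := fun i => if i <? Z.of_nat n1 then z1 i else z2 (i - Z.of_nat n1)).
  assert (Yg : Y g).
  { apply (sft_glue A d Y F K HF HK). intros i.
    destruct (Z.ltb_spec i (Z.of_nat n1)) as [Hi|Hi].
    - exists z1, i. split; [exact Hz1|]. apply (window_ext A d). intros k Hk. unfold g.
      destruct (Z.ltb_spec (i + Z.of_nat k) (Z.of_nat n1)); [reflexivity|].
      pose proof (Ez12 (Z.to_nat (i + Z.of_nat k - Z.of_nat n1)) ltac:(lia)) as E.
      rewrite Z2Nat.id in E by lia. replace (i + Z.of_nat k) with (Z.of_nat n1 + (i + Z.of_nat k - Z.of_nat n1)) at 2 by lia.
      rewrite E. f_equal; lia.
    - exists z2, (i - Z.of_nat n1). split; [exact Hz2|]. apply (window_ext A d). intros k Hk. unfold g.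
      destruct (Z.ltb_spec (i + Z.of_nat k) (Z.of_nat n1)); [lia|]. f_equal; lia. }
  assert (Hg0 : window g 0 K = s).
  { rewrite <- Hz1s. apply (window_ext A d). intros k Hk. unfold g.
    destruct (Z.ltb_spec (0 + Z.of_nat k) (Z.of_nat n1)); [reflexivity | lia]. }
  assert (Hg1 : window g (Z.of_nat (n1 + n2)) K = s).
  { rewrite <- Hz2s. apply (window_ext A d). intros k Hk. unfold g.
    destruct (Z.ltb_spec (Z.of_nat (n1 + n2) + Z.of_nat k) (Z.of_nat n1)); [lia|]. f_equal; lia. }
  set (cw := window g 0 (n1 + n2)).
  assert (Hcl : length cw = (n1 + n2)%nat) by apply window_length.
  assert (Ycw : Y (per A d cw)).
  { apply (loop_lemma A d Y F HF K HK HK0); [exact Yg | rewrite Hg0, Hg1; reflexivity | lia]. }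
  set (P := pow p (length cw)). set (M := pow cw (length p)).
  assert (HPM : length M = length P) by (unfold P, M; rewrite !length_pow; lia).
  assert (HP0 : (0 < length P)%nat) by (unfold P; rewrite length_pow; nia).
  assert (HperP : per A d P = per A d p) by (apply per_pow; lia).
  assert (HperM : per A d M = per A d cw) by (apply per_pow; lia).
  assert (HnotOcc : forall r, window (per A d P) r (length P) <> M).
  { intros r E. apply (HW (r + Z.of_nat n1)). rewrite <- Hz2w.
    apply (window_ext A d). intros k Hk.
    pose proof (f_equal (fun v => nth (n1 + k) v d) E) as E2. simpl in E2.
    rewrite window_nth in E2 by (unfold P; rewrite length_pow; nia).
    rewrite HperP in E2. replace (r + Z.of_nat n1 + Z.of_nat k) with (r + Z.of_nat (n1 + k)) by lia.
    rewrite E2. unfold M. rewrite nth_pow_lt by lia. unfold cw. rewrite window_nth by lia.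
    unfold g. destruct (Z.ltb_spec (0 + Z.of_nat (n1 + k)) (Z.of_nat n1)); [lia|]. f_equal; lia. }
  exists (Zs A P M). split; [|split; [|split]].
  - apply (base_in_Y A d Y F HF K HK HK0 P M HPM HP0).
    + unfold P. rewrite length_pow. nia.
    + rewrite HperP. exact Yp.
    + rewrite HperM. exact Ycw.
    + intros k Hk. unfold P, M. rewrite !nth_pow_lt by lia.
      unfold p, cw. rewrite !window_nth by lia. unfold g.
      destruct (Z.ltb_spec (0 + Z.of_nat k) (Z.of_nat n1)); [|lia].
      apply (window_eq_pt A d z z1 0 0 K); [rewrite Hzs, Hz1s; reflexivity | exact Hk].
  - apply (Zs_closed A d); assumption.
  - apply (Zs_invariant A d); assumption.
  - apply (Zs_CAM A d); assumption.
Qed.
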